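(* For any $T\in\mathbb{N}$ and $n,m\in\mathbb{N}_+$ there exist a constant $C(n)$ depending only on $n$, reals $\alpha_1,\dots,\alpha_m$ and $\beta_1,\dots,\beta_m>0$ such that, with $\phi(t;B)=\sum_{k=1}^m\alpha_ke^{-\beta_k(t-B)}$, $$\max_{1\le B\le T}\ \sum_{t=0}^\infty\big|\mathbb{I}\{t=B\}-\phi(t;B)\big|\le\frac{C(n)e^{0.01(n+1)T}}{m^n},$$ where the maximum is over integers $B$.
   Context: $\mathbb{I}\{\cdot\}$ denotes the indicator function. *)

(* Defs.v *)
From HB Require Import structures.
From mathcomp Require Import all_boot all_order all_algebra.
From mathcomp Require Import all_classical all_reals all_analysis.
Set Implicit Arguments. Unset Strict Implicit. Unset Printing Implicit Defensive.
Import Order.TTheory GRing.Theory Num.Theory.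
Local Open Scope ring_scope.

Definition phi (R : realType) (m : nat) (alpha beta : 'I_m -> R) (t B : nat) : R :=
  \sum_(k < m) alpha k * expR (- (beta k * (t%:R - B%:R))).

(* the l^1 error sum_{t>=0} |1{t = B} - phi(t;B)|, as a nonnegative
   extended-real series (always defined) *)
Definition err (R : realType) (m : nat) (alpha beta : 'I_m -> R) (B : nat) : \bar R :=
  (\sum_(0 <= t <oo) (`| (t == B)%:R - phi alpha beta t B |)%:E)%E.

(* Main.v *)
Require Import Defs.
From HB Require Import structures.
From mathcomp Require Import all_boot all_order all_algebra.
From mathcomp Require Import all_classical all_reals all_analysis.
From mathcomp Require Import ring lra zify.
Import Order.TTheory GRing.Theory Num.Theory.
Local Open Scope ring_scope.

Section Comb.
Variable R : realType.

Definition S (N u a : nat) : R :=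
  \sum_(k < N.+1) (-1) ^+ k * 'C(N, k)%:R * ((k + a)%N%:R ^+ u).

Lemma S_rec N u a : S N.+1 u a = S N u a - S N u a.+1.
Proof.
rewrite /S big_ord_recl /= bin0 ?mul1r ?expr0 ?mul1r.
under eq_bigr => i _ do rewrite /bump /= binS natrD mulrDr mulrDl.
rewrite big_split /= [X in _ + (X + _)]big_ord_recr /= bin_small // mulr0 mul0r addr0.
rewrite [in RHS](big_ord_recl N) /= bin0 ?mul1r ?expr0 ?mul1r.
rewrite -sumrN addrA; congr (_ + _ + _); apply: eq_bigr => i _.
by rewrite add1n exprS mulN1r !mulNr addSn addnS.
Qed.

Lemma S_diff N u a :
  S N u a.+1 - S N u a = \sum_(j < u) 'C(u, j)%:R * S N j a.
Proof.
rewrite /S -sumrB.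
have h : forall k : 'I_N.+1, (-1 : R) ^+ k * 'C(N, k)%:R * (k + a.+1)%N%:R ^+ u -
    (-1) ^+ k * 'C(N, k)%:R * (k + a)%N%:R ^+ u =
    \sum_(j < u) 'C(u, j)%:R * ((-1) ^+ k * 'C(N, k)%:R * (k + a)%N%:R ^+ j).
  move=> k.
  have -> : (k + a.+1 = (k + a).+1)%N by rewrite addnS.
  rewrite -natr1.
  rewrite exprD1n big_ord_recr /= binn mulr1n.
  rewrite -mulrBr addrK mulr_sumr; apply: eq_bigr => j _.
  by rewrite -mulr_natl; ring.
rewrite (eq_bigr _ (fun k _ => h k)) exchange_big /=; apply: eq_bigr => j _.
by rewrite mulr_sumr.
Qed.

Lemma S_low N : (forall u a, (u < N)%N -> S N u a = 0) /\
  (forall a, S N N a = (-1) ^+ N * N`!%:R).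
Proof.
elim: N => [|N [IH1 IH2]].
  split => // a; rewrite /S big_ord1 /= !expr0 bin0 !mul1r.
  by [].
have key : forall u a, S N.+1 u a = - \sum_(j < u) 'C(u, j)%:R * S N j a.
  by move=> u a; rewrite -S_diff S_rec opprB.
split.
  move=> u a hu; rewrite key big1 ?oppr0 // => j _.
  by rewrite IH1 ?mulr0 //; apply: leq_trans (ltn_ord j) _.
move=> a; rewrite key big_ord_recr /= big1; last first.
  by move=> j _; rewrite IH1 ?mulr0.
rewrite add0r IH2 binSn factS natrM exprS; ring.
Qed.

Lemma S_bound N u a :
  `|S N u a| <= (\sum_(k < N.+1) 'C(N, k)%:R) * ((N + a)%N%:R ^+ u).
Proof.
rewrite /S mulr_suml; apply: le_trans (ler_norm_sum _ _ _) _.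
apply: ler_sum => k _.
rewrite !normrM normrX normrN normr1 expr1n mul1r !ger0_norm ?exprn_ge0 //.
apply: ler_wpM2l => //; apply: lerXn2r; rewrite ?nnegrE // ler_nat.
by rewrite leq_add2r -ltnS.
Qed.
End Comb.
Section Ser.
Variable R : realType.

Lemma series_le (f : nat -> R) (d : R) : (forall t, 0 <= f t) ->
  (forall N, \sum_(0 <= t < N) f t <= d) ->
  (\sum_(0 <= t <oo) (f t)%:E <= d%:E)%E.
Proof.
move=> f0 hN.
apply: lime_le.
  by apply: is_cvg_nneseries => n _ _; rewrite lee_fin.
by apply: nearW => N; rewrite sumEFin lee_fin.
Qed.

Lemma geo_sum (d : R) N : \sum_(0 <= t < N) d * (2^-1) ^+ t.+1 = d * (1 - (2^-1) ^+ N).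
Proof.
elim: N => [|N IH]; first by rewrite big_geq // expr0 subrr mulr0.
rewrite big_nat_recr //= IH exprS; field.
by [].
Qed.

Lemma series_geo (f : nat -> R) (d : R) : 0 <= d -> (forall t, 0 <= f t <= d * (2^-1) ^+ t.+1) ->
  (\sum_(0 <= t <oo) (f t)%:E <= d%:E)%E.
Proof.
move=> d0 hf; apply: series_le; first by move=> t; case/andP: (hf t).
move=> N; apply: le_trans (_ : \sum_(0 <= t < N) d * (2^-1) ^+ t.+1 <= d).
  by apply: ler_sum => t _; case/andP: (hf t).
rewrite geo_sum ler_piMr // lerBlDr lerDl exprn_ge0 //.
Qed.

Lemma ind_sum (B N : nat) : \sum_(0 <= t < N) ((t == B)%:R : R) = (B < N)%:R.
Proof.
elim: N => [|N IH]; first by rewrite big_geq.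
rewrite big_nat_recr //= IH.
case: (ltngtP B N) => h.
- by rewrite (ltn_trans h (ltnSn N)) addr0.
- by rewrite ltnNge h addr0.
- by rewrite h ltnSn add0r.
Qed.
End Ser.
Section Fin.
Variable R : realType.

Lemma target_ge1 (n T m : nat) : (0 < m)%N -> (m <= T)%N ->
  1 <= (100%:R ^+ n : R) * expR ((n.+1)%:R / 100 * T%:R) / m%:R ^+ n.
Proof.
move=> m0 mT.
rewrite ler_pdivlMr ?exprn_gt0 ?ltr0n // mul1r.
have -> : (m%:R : R) = 100%:R * (m%:R / 100%:R) by field.
rewrite exprMn ler_wpM2l ?exprn_ge0 //.
apply: (@le_trans _ _ (expR (T%:R / 100) ^+ n)).
  have h1 : (m%:R / 100%:R : R) <= expR (T%:R / 100%:R).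
    apply: le_trans (expR_ge1Dx (T%:R / 100%:R)).
    have : (m%:R : R) <= T%:R by rewrite ler_nat.
    lra.
  apply: lerXn2r h1; rewrite nnegrE; first by rewrite divr_ge0.
  exact: ltW (expR_gt0 _).
rewrite -expRM_natl ler_expR.
have e : ((n.+1)%:R / 100 * T%:R : R) = n%:R * (T%:R/100) + T%:R/100.
  by rewrite -natr1; field.
rewrite e; have : (0:R) <= T%:R/100 by rewrite divr_ge0.
lra.
Qed.

Lemma geo_fin (M r d : R) (T B j : nat) : 0 < M -> 0 <= r -> r <= 4^-1 ->
  M * r * 2 ^+ (T.+2) <= d -> (B <= T)%N ->
  M * r ^+ j.+1 <= d * (2^-1) ^+ (B + j.+1).+1.
Proof.
move=> M0 r0 r4 hd BT.
have P0 : (0 : R) < 2 ^+ T.+2 by rewrite exprn_gt0.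
have hMr : M * r <= d * (2^-1) ^+ T.+2.
  by rewrite exprVn ler_pdivlMr.
have d0 : 0 <= d.
  apply: le_trans hd; apply: mulr_ge0; last exact: ltW.
  by apply: mulr_ge0 => //; exact: ltW.
have hrj : r ^+ j <= (2^-1) ^+ (j + j).
  rewrite exprD -expr2 -exprM mulnC exprM; apply: lerXn2r; rewrite ?nnegrE //.
  by rewrite exprVn expr2; lra.
apply: (@le_trans _ _ (d * (2^-1) ^+ T.+2 * (2^-1) ^+ (j + j))).
  have -> : M * r ^+ j.+1 = (M * r) * r ^+ j by rewrite exprS; ring.
  by apply: ler_pM => //; rewrite ?mulr_ge0 ?exprn_ge0 // ltW.
rewrite -mulrA -exprD ler_wpM2l // ler_wiXn2l //; first lra.
rewrite addSn addnS !ltnS.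
change (B + j <= T + (j + j))%N; exact: leq_add BT (leq_addl j j).
Qed.
End Fin.

Section Main.
Variable R : realType.

Lemma phi_eq (m T B t : nat) (eps : R) (a : nat -> R) : (T < m)%N -> (B <= T)%N ->
  0 < eps -> eps * T.+1%:R < 1 ->
  (forall k, a k = (-1) ^+ (T + k) * 'C(T, k)%:R * (k.+1)%:R ^+ T / T`!%:R) ->
  phi (fun k : 'I_m => if (k < T.+1)%N then a k else 0)
      (fun k : 'I_m => if (k < T.+1)%N then - ln (eps * (k.+1)%:R) else 1) t B
   * (eps ^+ T * T`!%:R) = (-1) ^+ T * eps ^+ (t + T - B) * S R T (t + T - B) 1.
Proof.
move=> Tm BT e0 e1 ha.
set u := (t + T - B)%N.
rewrite /phi mulr_suml /S mulr_sumr.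
rewrite (big_ord_widen m (fun k : nat => (-1) ^+ T * eps ^+ u * ((-1) ^+ k * 'C(T, k)%:R * (k + 1)%N%:R ^+ u)) Tm) [RHS]big_mkcond /=.
apply: eq_bigr => k _; case: ifP => hk; last by rewrite mul0r mul0r.
set x := eps * (k.+1)%:R.
have x0 : 0 < x by rewrite mulr_gt0.
set E := expR (- (- ln x * (t%:R - B%:R))).
have hxu : E * x ^+ T = x ^+ u.
  have hp : forall p, x ^+ p = expR (p%:R * ln x).
    by move=> p; rewrite expRM_natl lnK.
  rewrite /E (hp T) (hp u).
  rewrite -expRD; congr expR; rewrite /u natrB; last by rewrite (leq_trans BT) // leq_addl.
  rewrite natrD; ring.
rewrite ha.
have -> : (-1) ^+ (T + k) * 'C(T, k)%:R * k.+1%:R ^+ T / T`!%:R * E * (eps ^+ T * T`!%:R)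
   = (-1) ^+ (T + k) * 'C(T, k)%:R * (E * x ^+ T).
  rewrite /x exprMn; field.
  by rewrite pnatr_eq0 -lt0n fact_gt0.
by rewrite hxu /x exprMn exprD addn1; ring.
Qed.

End Main.

Theorem lemmaF2 (R : realType) (n : nat) : (0 < n)%N ->
  exists C : R, forall (T m : nat), (0 < m)%N ->
    exists alpha beta : 'I_m -> R,
      (forall k, 0 < beta k) /\
      (forall B : nat, (1 <= B <= T)%N ->
         (err alpha beta B <=
          (C * expR ((n.+1)%:R / 100 * T%:R) / (m%:R ^+ n))%:E)%E).
Proof.
move=> n0; exists (100%:R ^+ n) => T m m0.
set d := (100%:R ^+ n * expR ((n.+1)%:R / 100 * T%:R) / (m%:R ^+ n)).
have d0 : 0 < d by rewrite /d !mulr_gt0 ?invr_gt0 ?exprn_gt0 ?expR_gt0 ?ltr0n.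
case: (leqP m T) => hmT.
  exists (fun=> 0), (fun=> 1); split => [k|B hB]; first exact: ltr01.
  rewrite /err; apply: series_le => [t|N]; first exact: normr_ge0.
  have -> : \sum_(0 <= t < N) `|(t == B)%:R - phi ((fun=> 0) : 'I_m -> R) ((fun=> 1) : 'I_m -> R) t B| =
            \sum_(0 <= t < N) ((t == B)%:R : R).
    apply: eq_bigr => t _; rewrite /phi big1 ?subr0 ?ger0_norm //.
    by move=> k _; rewrite mul0r.
  rewrite ind_sum; apply: le_trans _ (target_ge1 R n T m m0 hmT).
  by case: (B < N)%N.
set M0 := \sum_(k < T.+1) ('C(T, k)%:R : R).
have M00 : 0 <= M0 by apply: sumr_ge0.
set M := M0 * (T.+1)%:R ^+ T / T`!%:R + 1.
have M1 : 0 < M by rewrite /M ltr_pwDr // divr_ge0 ?mulr_ge0 ?exprn_ge0.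
set D := 4 * d + M * 2 ^+ T.+2.
have P0 : (0 : R) < 2 ^+ T.+2 by rewrite exprn_gt0.
have D0 : 0 < D by rewrite /D; apply: addr_gt0; apply: mulr_gt0.
set r := d / D.
have r0 : 0 < r by rewrite divr_gt0.
have r4 : r <= 4^-1.
  rewrite /r ler_pdivrMr // /D.
  have : 0 <= M * 2 ^+ T.+2 by apply: mulr_ge0; apply: ltW.
  set P := M * 2 ^+ T.+2; lra.
have hMr : M * r * 2 ^+ T.+2 <= d.
  have -> : M * r * 2 ^+ T.+2 = (M * 2 ^+ T.+2) * d / D.
    by rewrite /r; field; rewrite gt_eqF.
  rewrite ler_pdivrMr // /D.
  set Q := M * 2 ^+ T.+2; nra.
set eps := r / (T.+1)%:R.
have e0 : 0 < eps by rewrite divr_gt0.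
have er : eps * (T.+1)%:R = r by rewrite /eps divfK.
have e1 : eps * (T.+1)%:R < 1 by rewrite er; apply: le_lt_trans r4 _; lra.
set a := fun k : nat => (-1) ^+ (T + k) * 'C(T, k)%:R * ((k.+1)%:R : R) ^+ T / T`!%:R.
exists (fun k : 'I_m => if (k < T.+1)%N then a k else 0).
exists (fun k : 'I_m => if (k < T.+1)%N then - ln (eps * (k.+1)%:R) else 1).
split.
  move=> k; case: ifP => hk //; rewrite oppr_gt0 ln_lt0 // mulr_gt0 //=.
  apply: le_lt_trans e1; apply: ler_wpM2l; first exact: ltW.
  by rewrite ler_nat.
move=> B /andP[B1 BT].
have hT : (T < m)%N by [].
rewrite /err; apply: series_geo; first exact: ltW d0.
move=> t; rewrite normr_ge0 /=.
have key := phi_eq R m T B t eps a hT BT e0 e1 (fun k => erefl).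
set F := phi _ _ t B in key *.
set c := eps ^+ T * T`!%:R in key.
have hc : 0 < c by rewrite /c mulr_gt0 ?exprn_gt0 ?ltr0n ?fact_gt0.
have dt0 : 0 <= d * 2^-1 ^+ t.+1 by rewrite mulr_ge0 ?exprn_ge0 ?ltW.
case: (ltngtP t B) => htB.
- have hu : (t + T - B < T)%N by lia.
  rewrite ((S_low R T).1 _ _ hu) mulr0 in key.
  have -> : F = 0 by move/eqP: key; rewrite mulf_eq0 (gt_eqF hc) orbF => /eqP.
  by rewrite subr0 normr0.
- have [j hj] : exists j, t = (B + j.+1)%N by exists (t - B).-1; lia.
  have hu : (t + T - B = T + j.+1)%N by lia.
  rewrite hu in key; rewrite sub0r normrN.
  have e2 : (M - 1) * r ^+ j.+1 * c = eps ^+ (T + j.+1) * (M0 * ((T + 1)%N%:R) ^+ (T + j.+1)).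
    rewrite /M /c -er addn1 exprMn !exprD; field.
    by rewrite pnatr_eq0 -lt0n fact_gt0.
  have h : `|F| * c <= (M - 1) * r ^+ j.+1 * c.
    rewrite e2 -(ger0_norm (ltW hc)) -normrM key !normrM normrX normrN normr1 expr1n mul1r.
    rewrite (ger0_norm (exprn_ge0 _ (ltW e0))); apply: ler_wpM2l; first exact: exprn_ge0 (ltW e0).
    exact: S_bound.
  rewrite ler_pM2r // in h; apply: le_trans h _.
  apply: le_trans (_ : M * r ^+ j.+1 <= _); first by apply: ler_wpM2r; [exact: exprn_ge0 (ltW r0) | lra].
  by rewrite hj; exact: (geo_fin R M r d T B j M1 (ltW r0) r4 hMr BT).
- subst t.
  have hu : (B + T - B = T)%N by lia.
  rewrite hu ((S_low R T).2 1) in key.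
  have -> : F = 1.
    apply: (mulIf (negbT (gt_eqF hc))); rewrite key mul1r /c.
    have sq : (-1) ^+ T * (-1) ^+ T = 1 :> R by rewrite -exprMn mulrNN mulr1 expr1n.
    by rewrite (_ : forall x y z : R, x * y * (x * z) = (x * x) * (y * z)) ?sq ?mul1r // => x y z; ring.
  by rewrite subrr normr0.
Qed.
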